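(* Let $(X,\|\cdot\|)$ be a normed linear space, let $I$ be a non-trivial admissible ideal in $\mathbb{N}$, let $x=\{x_k\}_{k\in\mathbb{N}}$ be a sequence in $X$ and let $r>0$. Then the set $I\text{-}st\text{-}\mathrm{LIM}_x^r$ is convex.
   Context: An ideal $I$ in $\mathbb{N}$ is a family of subsets of $\mathbb{N}$ containing $\emptyset$, closed under finite unions and under taking subsets; it is non-trivial if $\mathbb{N}\notin I$ and admissible if $\{n\}\in I$ for every $n$. For $r\ge0$, $x$ is $r$-$I$-statistically convergent to $\xi\in X$ if for every $\varepsilon>0$ and $\delta>0$, $\{n\in\mathbb{N}:\frac1n|\{k\le n:\|x_k-\xi\|\ge r+\varepsilon\}|\ge\delta\}\in I$; $I\text{-}st\text{-}\mathrm{LIM}_x^r$ is the set of all such $\xi$. *)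

(* Defs.v *)
From HB Require Import structures.
From mathcomp Require Import all_boot all_order all_algebra.
From mathcomp Require Import all_classical all_reals all_analysis.
Set Implicit Arguments. Unset Strict Implicit. Unset Printing Implicit Defensive.
Import Order.TTheory GRing.Theory Num.Theory.
Import numFieldNormedType.Exports.
Local Open Scope classical_set_scope.
Local Open Scope ring_scope.

(* An ideal on N = {1,2,...}; we represent subsets of N as sets of nat
   (the element 0 is irrelevant for the sets considered below). *)
Definition is_ideal (I : set (set nat)) : Prop :=
  I set0 /\
  (forall A B, I A -> I B -> I (A `|` B)) /\
  (forall A B, B `<=` A -> I A -> I B).

Definition natN : set nat := [set n | (0 < n)%N].

Definition nontrivial_ideal (I : set (set nat)) : Prop := ~ I natN.

Definition admissible_ideal (I : set (set nat)) : Prop :=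
  forall n : nat, (0 < n)%N -> I [set n].

Definition count_far (R : realType) (X : normedModType R)
  (x : nat -> X) (xi : X) (r eps : R) (n : nat) : nat :=
  #|[set k : 'I_n.+1 | (0 < (k : nat))%N &&
      `[< (r + eps <= Num.norm (x (k : nat) - xi))%R >] ]|%N.

Definition rI_st_conv (R : realType) (X : normedModType R)
  (I : set (set nat)) (x : nat -> X) (r : R) (xi : X) : Prop :=
  forall eps delta : R, 0 < eps -> 0 < delta ->
    I [set n : nat | (0 < n)%N /\
        delta <= (count_far x xi r eps n)%:R / n%:R].

Definition I_st_LIM (R : realType) (X : normedModType R)
  (I : set (set nat)) (x : nat -> X) (r : R) : set X :=
  [set xi | rI_st_conv I x r xi].

Definition convex_set_in (R : realType) (X : normedModType R) (S : set X) : Prop :=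
  forall (a b : X) (t : R), S a -> S b -> 0 <= t -> t <= 1 ->
    S (t *: a + (1 - t) *: b).

(* Main.v *)
Require Import Defs.
From HB Require Import structures.
From mathcomp Require Import all_boot all_order all_algebra.
From mathcomp Require Import all_classical all_reals all_analysis.
Import Order.TTheory GRing.Theory Num.Theory.
Import numFieldNormedType.Exports.
Local Open Scope classical_set_scope.
Local Open Scope ring_scope.

Lemma far_split (R : realType) (X : normedModType R) (y a b : X) (t s : R) :
  0 <= t -> t <= 1 -> s <= `|y - (t *: a + (1 - t) *: b)| ->
  s <= `|y - a| \/ s <= `|y - b|.
Proof.
move=> t0 t1 H.
case: (lerP s `|y - a|) => ha; first by left.
case: (lerP s `|y - b|) => hb; first by right.
exfalso.
have E : y - (t *: a + (1 - t) *: b) = t *: (y - a) + (1 - t) *: (y - b).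
  by rewrite !scalerBr addrACA -scalerDl [t + _]addrC subrK scale1r opprD.
move: H; rewrite E => H.
have t1' : 0 <= 1 - t by rewrite subr_ge0.
set M := Num.max `|y - a| `|y - b|.
have : `|t *: (y - a) + (1 - t) *: (y - b)| <= M.
  apply: (le_trans (ler_normD _ _)).
  rewrite !normrZ (ger0_norm t0) (ger0_norm t1').
  have -> : M = t * M + (1 - t) * M by rewrite -mulrDl [t + _]addrC subrK mul1r.
  apply: lerD; apply: ler_wpM2l => //; rewrite ?le_max ?lexx ?orbT //.
have : M < s by rewrite gt_max ha hb.
move=> hM hle; have := lt_le_trans hM (le_trans H hle); by rewrite ltxx.
Qed.

Lemma count_split (R : realType) (X : normedModType R) (x : nat -> X) (a b : X) (t r eps : R) (n : nat) :
  0 <= t -> t <= 1 ->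
  (count_far x (t *: a + (1 - t) *: b)%R r eps n <= count_far x a r eps n + count_far x b r eps n)%N.
Proof.
move=> t0 t1; rewrite /count_far.
set C := [set k : 'I_n.+1 | _].
set A := [set k : 'I_n.+1 | _].
set B := [set k : 'I_n.+1 | _].
rewrite -cardUI; apply: leq_trans (leq_addr _ _).
apply: subset_leq_card; apply/fintype.subsetP => k; rewrite /C /A /B /= !inE /=.
move=> /andP[k0 /asboolP H].
have [h|h] := @far_split _ _ _ _ _ _ _ t0 t1 H.
  by apply/orP; left; rewrite in_setE /= k0 /=; apply/asboolP.
by apply/orP; right; rewrite in_setE /= k0 /=; apply/asboolP.
Qed.

Theorem theorem3p4 (R : realType) (X : normedModType R)
  (I : set (set nat)) (x : nat -> X) (r : R) :
  is_ideal I -> nontrivial_ideal I -> admissible_ideal I -> 0 < r ->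
  convex_set_in (I_st_LIM I x r).
Proof.
move=> [_ [IU IS]] _ _ _ a b t Sa Sb t0 t1 eps delta e0 d0.
have d2 : 0 < delta / 2 by rewrite divr_gt0.
apply: (IS _ _ _ (IU _ _ (Sa eps _ e0 d2) (Sb eps _ e0 d2))).
move=> n /= [n0 H].
case: (lerP (delta / 2) ((count_far x a r eps n)%:R / n%:R)) => ha; first by left; split.
case: (lerP (delta / 2) ((count_far x b r eps n)%:R / n%:R)) => hb; first by right; split.
exfalso.
have hn : 0 < (n%:R : R) by rewrite ltr0n.
have := @count_split _ _ x a b t r eps n t0 t1.
rewrite -(ler_nat R) natrD => hc.
have : (count_far x (t *: a + (1 - t) *: b) r eps n)%:R / n%:R < delta.
  apply: (le_lt_trans (ler_wpM2r _ hc)); first by rewrite invr_ge0 ltW.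
  rewrite mulrDl (splitr delta); exact: ltrD.
by rewrite ltNge H.
Qed.
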